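(* Let $M$ be a structure in a countable vocabulary $L$ and let $\phi$ be a first order $L$-sentence in negation normal form. There is a mapping $\Phi$ such that for every strategy $\tau$ of Eloise in the evaluation game $G(M,\phi)$, $\Phi(\tau)$ is a strategy of Eloise in the model existence game $\mathrm{MEG}(\phi)$. If $\tau$ is a winning strategy, then so is $\Phi(\tau)$.
   Context: An assignment into a set $X$ is a map from a finite set of variables into $X$; $s(a/x)$ denotes the assignment agreeing with $s$ except that it sends $x$ to $a$. A formula is in negation normal form if negation occurs only in front of atomic formulas; the connectives are $\neg,\wedge,\vee,\forall,\exists$. Evaluation game $G(M,\phi)$: players Abelard and Eloise. Positions are pairs $(\psi,s)$ with $\psi$ a subformula of $\phi$ and $s$ an assignment into $M$; initial position $(\phi,\emptyset)$. At $(\psi,s)$: if $\psi$ is a literal, the game ends and Eloise wins iff $s$ satisfies $\psi$ in $M$; if $\psi=\psi_0\wedge\psi_1$, Abelard chooses the next position $(\psi_0,s)$ or $(\psi_1,s)$; if $\psi=\psi_0\vee\psi_1$, Eloise chooses it; if $\psi=\forall x\theta$, Abelard chooses $a\in M$ and the next position is $(\theta,s(a/x))$; if $\psi=\exists x\theta$, Eloise chooses $a\in M$ and the next position is $(\theta,s(a/x))$. A strategy is winning if its player wins every play following it. Model existence game $\mathrm{MEG}(\phi)$: let $C=\{c_0,c_1,\ldots\}$ be a countable set of new distinct constant symbols; a $C$-assignment is an assignment into $C$. Positions are finite sets $S$ of pairs $(\psi,s)$ with $\psi$ a subformula of $\phi$ and $s$ a $C$-assignment; the initial position is $\{(\phi,\emptyset)\}$.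 At each move, given the position $S$, Abelard selects a pair in $S$ and one of the following applies: if $(\psi_0\wedge\psi_1,s)\in S$, Abelard may decide that the next position is $S\cup\{(\psi_0,s)\}$ or $S\cup\{(\psi_1,s)\}$; if $(\psi_0\vee\psi_1,s)\in S$, Abelard may demand that Eloise choose whether the next position is $S\cup\{(\psi_0,s)\}$ or $S\cup\{(\psi_1,s)\}$; if $(\forall x\theta,s)\in S$, Abelard may choose $n\in\mathbb N$ and the next position is $S\cup\{(\theta,s(c_n/x))\}$; if $(\exists x\theta,s)\in S$, Abelard may demand that Eloise choose some $c_n$, and the next position is $S\cup\{(\theta,s(c_n/x))\}$. Abelard wins if at some point the position contains both $(\psi,s)$ and $(\neg\psi,s')$ with $\psi$ atomic and $s(x)=s'(x)$ for all variables $x$ of $\psi$. Otherwise (the game continuing for infinitely many moves) Eloise wins. *)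

(* Defs.v *)
From mathcomp Require Import all_boot.
From Stdlib Require Import ClassicalEpsilon.
From Stdlib Require List.

Set Implicit Arguments.
Unset Strict Implicit.
Unset Printing Implicit Defensive.

(* A vocabulary: relation symbols and function symbols with arities
   (constant symbols are 0-ary function symbols). *)
Record vocab := Vocab {
  rel_sym : Type;
  rel_ar : rel_sym -> nat;
  fun_sym : Type;
  fun_ar : fun_sym -> nat }.

Definition countable_vocab (L : vocab) : Prop :=
  (exists f : rel_sym L -> nat, injective f) /\
  (exists g : fun_sym L -> nat, injective g).

Inductive term (L : vocab) : Type :=
| Var : nat -> term L
| App : forall f : fun_sym L, ('I_(fun_ar f) -> term L) -> term L.
Arguments Var {L} _.
Arguments App {L} f _.

Inductive atomic (L : vocab) : Type :=
| ARel : forall r : rel_sym L, ('I_(rel_ar r) -> term L) -> atomic L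
| AEq : term L -> term L -> atomic L.
Arguments ARel {L} r _.
Arguments AEq {L} _ _.

Inductive formula (L : vocab) : Type :=
| Pos : atomic L -> formula L
| Neg : atomic L -> formula L
| And : formula L -> formula L -> formula L
| Or  : formula L -> formula L -> formula L
| All : nat -> formula L -> formula L
| Ex  : nat -> formula L -> formula L.
Arguments Pos {L} _.
Arguments Neg {L} _.
Arguments And {L} _ _.
Arguments Or {L} _ _.
Arguments All {L} _ _.
Arguments Ex {L} _ _.

Fixpoint tvars (L : vocab) (t : term L) (y : nat) : Prop :=
  match t with
  | Var x => x = y
  | App f a => exists i, tvars (a i) y
  end.

Definition avars (L : vocab) (a : atomic L) (y : nat) : Prop :=
  match a with
  | ARel r ts => exists i, tvars (ts i) y
  | AEq t u => tvars t y \/ tvars u y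
  end.

Fixpoint fv (L : vocab) (p : formula L) (y : nat) : Prop :=
  match p with
  | Pos a | Neg a => avars a y
  | And p q | Or p q => fv p y \/ fv q y
  | All x p | Ex x p => x <> y /\ fv p y
  end.

Definition sentence (L : vocab) (p : formula L) : Prop := forall y, ~ fv p y.

Record structure (L : vocab) := Structure {
  dom :> Type;
  dom_inh : inhabited dom;
  fun_int : forall f : fun_sym L, ('I_(fun_ar f) -> dom) -> dom;
  rel_int : forall r : rel_sym L, ('I_(rel_ar r) -> dom) -> Prop }.

(* An assignment into X: a partial map from variables to X
   (s x = None means x is not in the domain of s). *)
Definition assign (X : Type) := nat -> option X.

Definition empty_assign (X : Type) : assign X := fun _ => None.

Definition upd (X : Type) (s : assign X) (x : nat) (a : X) : assign X :=
  fun y => if y == x then Some a else s y.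

Section Eval.
Variables (L : vocab) (M : structure L).

(* an arbitrary element, used only for variables outside the domain
   of the assignment (never relevant for positions of the games). *)
Definition dflt : M := epsilon (@dom_inh L M) (fun _ => True).

Fixpoint teval (s : assign M) (t : term L) : M :=
  match t with
  | Var x => match s x with Some a => a | None => dflt end
  | App f a => @fun_int L M f (fun i => teval s (a i))
  end.

Definition asat (s : assign M) (a : atomic L) : Prop :=
  match a with
  | ARel r ts => @rel_int L M r (fun i => teval s (ts i))
  | AEq t u => teval s t = teval s u
  end.
End Eval.

Definition epos (L : vocab) (M : structure L) := (formula L * assign M)%type.

(* A strategy of Eloise: given the play so far (chronological list of
   positions, the last one being the current position), at a disjunction
   she chooses a disjunct (false = left, true = right), at an existential
   position she chooses an element of M. *)
Record EStrat (L : vocab) (M : structure L) := EStrategy {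
  e_or : seq (epos M) -> bool;
  e_ex : seq (epos M) -> M }.

Inductive EG_play (L : vocab) (M : structure L) (phi : formula L)
    (tau : EStrat M) : seq (epos M) -> Prop :=
| eg_init : EG_play phi tau [:: (phi, @empty_assign M)]
| eg_and : forall h p q s (c : bool),
    EG_play phi tau (rcons h (And p q, s)) ->
    EG_play phi tau (rcons (rcons h (And p q, s)) (if c then q else p, s))
| eg_or : forall h p q s,
    EG_play phi tau (rcons h (Or p q, s)) ->
    EG_play phi tau (rcons (rcons h (Or p q, s))
      (if e_or tau (rcons h (Or p q, s)) then q else p, s))
| eg_all : forall h x p s (a : M),
    EG_play phi tau (rcons h (All x p, s)) ->
    EG_play phi tau (rcons (rcons h (All x p, s)) (p, upd s x a))
| eg_ex : forall h x p s,
    EG_play phi tau (rcons h (Ex x p, s)) ->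
    EG_play phi tau (rcons (rcons h (Ex x p, s))
      (p, upd s x (e_ex tau (rcons h (Ex x p, s))))).

Definition EG_winning (L : vocab) (M : structure L) (phi : formula L)
    (tau : EStrat M) : Prop :=
  (forall h a s, EG_play phi tau (rcons h (Pos a, s)) -> asat s a) /\
  (forall h a s, EG_play phi tau (rcons h (Neg a, s)) -> ~ asat s a).

(* C = {c_0, c_1, ...} is represented by nat (c_n ~ n);
   a C-assignment is an assignment into nat. *)
Definition mpos (L : vocab) := (formula L * assign nat)%type.

(* A history is the list of moves made so far; each move is recorded as
   (selected pair, pair added to the position). *)
Definition mhist (L : vocab) := seq (mpos L * mpos L).

(* The current position: the set of pairs {(phi, empty)} together with all
   pairs added so far. *)
Definition mset (L : vocab) (phi : formula L) (h : mhist L) : seq (mpos L) :=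
  (phi, @empty_assign nat) :: map snd h.

(* A strategy of Eloise in MEG(phi): given the history and the pair selected
   by Abelard, she chooses a disjunct (false = left, true = right) or an
   index n of a constant c_n. *)
Record MStrat (L : vocab) := MStrategy {
  m_or : mhist L -> mpos L -> bool;
  m_ex : mhist L -> mpos L -> nat }.

Inductive MEG_hist (L : vocab) (phi : formula L) (sigma : MStrat L) :
    mhist L -> Prop :=
| meg_nil : MEG_hist phi sigma [::]
| meg_and : forall h p q s (c : bool),
    MEG_hist phi sigma h -> List.In (And p q, s) (mset phi h) ->
    MEG_hist phi sigma (rcons h ((And p q, s), (if c then q else p, s)))
| meg_or : forall h p q s,
    MEG_hist phi sigma h -> List.In (Or p q, s) (mset phi h) ->
    MEG_hist phi sigma (rcons h ((Or p q, s),
      (if m_or sigma h (Or p q, s) then q else p, s)))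
| meg_all : forall h x p s (n : nat),
    MEG_hist phi sigma h -> List.In (All x p, s) (mset phi h) ->
    MEG_hist phi sigma (rcons h ((All x p, s), (p, upd s x n)))
| meg_ex : forall h x p s,
    MEG_hist phi sigma h -> List.In (Ex x p, s) (mset phi h) ->
    MEG_hist phi sigma (rcons h ((Ex x p, s),
      (p, upd s x (m_ex sigma h (Ex x p, s))))).

Definition contradictory (L : vocab) (S : seq (mpos L)) : Prop :=
  exists (a : atomic L) (s s' : assign nat),
    List.In (Pos a, s) S /\ List.In (Neg a, s') S /\
    (forall x, avars a x -> s x = s' x).

Definition MEG_winning (L : vocab) (phi : formula L) (sigma : MStrat L) : Prop :=
  forall h, MEG_hist phi sigma h -> ~ contradictory (mset phi h).

(* Main.v *)
Require Import Defs.
From mathcomp Require Import all_boot.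
From Stdlib Require Import ClassicalEpsilon FunctionalExtensionality.
From Stdlib Require List.

Set Implicit Arguments.
Unset Strict Implicit.
Unset Printing Implicit Defensive.

Section Constr.
Variables (L : vocab) (M : structure L) (phi : formula L) (tau : EStrat M).

Definition comp (h : nat -> M) (s : assign nat) : assign M :=
  fun y => match s y with Some n => Some (h n) | None => None end.

Definition updf (h : nat -> M) (n : nat) (e : M) : nat -> M :=
  fun k => if k == n then e else h k.

Definition usedm (m : mpos L * mpos L) : nat :=
  match m with
  | ((All x _, _), (_, s')) | ((Ex x _, _), (_, s')) =>
      match s' x with Some n => n.+1 | None => 0 end
  | _ => 0
  end.

Definition fresh (H : mhist L) : nat := sumn (map usedm H).

Definition cp (h : nat -> M) (psi : formula L) (s : assign nat) : seq (epos M) :=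
  epsilon (inhabits [::])
    (fun pl => EG_play phi tau (rcons pl (psi, comp h s))).

Definition Ech (h : nat -> M) (psi : formula L) (s : assign nat) : M :=
  e_ex tau (rcons (cp h psi s) (psi, comp h s)).

Definition step (H : mhist L) (h : nat -> M) (m : mpos L * mpos L) : nat -> M :=
  match m with
  | ((Ex x p, s), _) => updf h (fresh H) (Ech h (Ex x p) s)
  | _ => h
  end.

Fixpoint hi (r : mhist L) : nat -> M :=
  match r with
  | [::] => fun _ => dflt M
  | m :: r' => step (rev r') (hi r') m
  end.

Definition hI (H : mhist L) := hi (rev H).

Lemma hI_rcons H m : hI (rcons H m) = step H (hI H) m.
Proof. by rewrite /hI rev_rcons /= revK. Qed.

Lemma fresh_rcons H m : fresh (rcons H m) = fresh H + usedm m.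
Proof. by rewrite /fresh map_rcons sumn_rcons. Qed.

Definition sigma : MStrat L :=
  MStrategy (fun H sel => e_or tau (rcons (cp (hI H) sel.1 sel.2)
                                     (sel.1, comp (hI H) sel.2)))
            (fun H _ => fresh H).

Definition Inv (H : mhist L) :=
  forall psi s, List.In (psi, s) (mset phi H) ->
    (forall y n, s y = Some n -> n < fresh H) /\
    exists pl, EG_play phi tau (rcons pl (psi, comp (hI H) s)).

Lemma In_rcons (T : Type) (x y : T) l : List.In x (rcons l y) -> List.In x l \/ x = y.
Proof.
elim: l => [|a l IH] /=; first by case => [->|[]]; right.
case=> [->|/IH [?|?]]; by [left; left | left; right | right].
Qed.

Lemma In_mset H m q : List.In q (mset phi (rcons H m)) ->
  List.In q (mset phi H) \/ q = m.2.
Proof.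
rewrite /mset map_rcons /=; case=> [<-|Hq]; first by left; left.
have [?|->] := In_rcons Hq; by [left; right|right].
Qed.

Lemma cp_spec h psi s : (exists pl, EG_play phi tau (rcons pl (psi, comp h s))) ->
  EG_play phi tau (rcons (cp h psi s) (psi, comp h s)).
Proof.
move=> He; exact: (epsilon_spec (inhabits [::])
  (fun pl => EG_play phi tau (rcons pl (psi, comp h s))) He).
Qed.

Lemma old_ok H H' : Inv H -> fresh H <= fresh H' ->
  (forall k, k < fresh H -> hI H' k = hI H k) ->
  forall psi s, List.In (psi, s) (mset phi H) ->
    (forall y n, s y = Some n -> n < fresh H') /\
    exists pl, EG_play phi tau (rcons pl (psi, comp (hI H') s)).
Proof.
move=> Hi Hf Hh psi s Hin; have [Hv [pl Hp]] := Hi _ _ Hin; split.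
  by move=> y n /Hv Hn; exact: leq_trans Hn Hf.
exists pl; have -> : comp (hI H') s = comp (hI H) s; last by [].
apply: functional_extensionality => y; rewrite /comp.
by case E: (s y) => [n|//]; rewrite Hh // (Hv _ _ E).
Qed.

Lemma comp_upd h s x n : comp h (upd s x n) = upd (comp h s) x (h n).
Proof.
apply: functional_extensionality => y; rewrite /comp /upd.
by case: (y == x).
Qed.

Lemma inv_all H : MEG_hist phi sigma H -> Inv H.
Proof.
elim=> {H}.
- move=> psi s /= [[<- <-]|[]]; split => //; exists [::]; exact: eg_init.
- move=> H p q s c Hh Hi Hin psi' s' /In_mset [Hold|Hnew].
    apply: (old_ok (H:=H) Hi) Hold; first by rewrite fresh_rcons leq_addr.
    by move=> k _; rewrite hI_rcons.
  case: Hnew => -> ->; rewrite hI_rcons /=.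
  have [Hv [pl Hp]] := Hi _ _ Hin; split.
    by move=> y n /Hv Hn; rewrite fresh_rcons; exact: leq_trans Hn (leq_addr _ _).
  by exists (rcons pl (And p q, comp (hI H) s)); exact: eg_and.
- move=> H p q s Hh Hi Hin psi' s' /In_mset [Hold|Hnew].
    apply: (old_ok (H:=H) Hi) Hold; first by rewrite fresh_rcons leq_addr.
    by move=> k _; rewrite hI_rcons.
  case: Hnew => -> ->; rewrite hI_rcons /=.
  have [Hv Hp] := Hi _ _ Hin; split.
    by move=> y n /Hv Hn; rewrite fresh_rcons; exact: leq_trans Hn (leq_addr _ _).
  exists (rcons (cp (hI H) (Or p q) s) (Or p q, comp (hI H) s)).
  exact: (eg_or (cp_spec Hp)).
- move=> H x p s n Hh Hi Hin psi' s' /In_mset [Hold|Hnew].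
    apply: (old_ok (H:=H) Hi) Hold; first by rewrite fresh_rcons leq_addr.
    by move=> k _; rewrite hI_rcons.
  case: Hnew => -> ->; rewrite hI_rcons /=.
  have [Hv [pl Hp]] := Hi _ _ Hin; split.
    move=> y k; rewrite /upd fresh_rcons /=; case: (y == x).
      by case=> <-; rewrite eqxx addnS ltnS leq_addl.
    by rewrite eqxx => /Hv Hk; exact: leq_trans Hk (leq_addr _ _).
  exists (rcons pl (All x p, comp (hI H) s)); rewrite comp_upd; exact: eg_all.
- move=> H x p s Hh Hi Hin psi' s' /In_mset [Hold|Hnew].
    apply: (old_ok (H:=H) Hi) Hold; first by rewrite fresh_rcons leq_addr.
    move=> k Hk; rewrite hI_rcons /= /updf.
    by have -> : (k == fresh H) = false by apply/eqP => E; rewrite E ltnn in Hk.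
  case: Hnew => -> ->; rewrite hI_rcons /=.
  have [Hv Hp] := Hi _ _ Hin; split.
    move=> y k; rewrite /upd fresh_rcons /=; case: (y == x).
      by case=> <-; rewrite eqxx addnS ltnS leq_addr.
    by rewrite eqxx => /Hv Hk; exact: leq_trans Hk (leq_addr _ _).
  exists (rcons (cp (hI H) (Ex x p) s) (Ex x p, comp (hI H) s)).
  rewrite comp_upd /updf eqxx.
  have -> : comp (fun k => if k == fresh H then Ech (hI H) (Ex x p) s else hI H k) s
            = comp (hI H) s.
    apply: functional_extensionality => y; rewrite /comp.
    case E: (s y) => [k|//]; have Hk := Hv _ _ E.
    by have -> : (k == fresh H) = false by apply/eqP => E'; rewrite E' ltnn in Hk.
  exact: (eg_ex (cp_spec Hp)).
Qed.

End Constr.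

Fixpoint teval_ext (L : vocab) (M : structure L) (s1 s2 : assign M) (t : term L)
  {struct t} : (forall y, tvars t y -> s1 y = s2 y) -> teval s1 t = teval s2 t.
Proof.
case: t => [x|f a] /= Hs; first by rewrite Hs.
congr (fun_int _); apply: functional_extensionality => i.
apply: teval_ext => y Hy; apply: Hs; by exists i.
Qed.

Theorem theorem2 (L : vocab) (HL : countable_vocab L) (M : structure L)
    (phi : formula L) (Hphi : sentence phi) :
  exists Phi : EStrat M -> MStrat L,
    forall tau : EStrat M, EG_winning phi tau -> MEG_winning phi (Phi tau).
Proof.
exists (fun tau => sigma phi tau) => tau [Wp Wn] H Hh [a [s [s' [Hp [Hn Hag]]]]].
have Hi := inv_all Hh.
have [_ [pl1 P1]] := Hi _ _ Hp.
have [_ [pl2 P2]] := Hi _ _ Hn.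
apply: (Wn _ _ _ P2).
have Hag' : forall y, avars a y ->
   comp (hI phi tau H) s y = comp (hI phi tau H) s' y.
  by move=> y /Hag; rewrite /comp => ->.
have := Wp _ _ _ P1.
case: a Hag' {Hp Hn Hag P1 P2} => [r ts|t u] /= Hag'.
  congr (rel_int _); apply: functional_extensionality => i.
  by apply: teval_ext => y Hy; apply: Hag'; exists i.
rewrite (teval_ext (t:=t) (s2 := comp (hI phi tau H) s')); last by move=> y Hy; apply: Hag'; left.
by rewrite (teval_ext (t:=u) (s2 := comp (hI phi tau H) s')) //; move=> y Hy; apply: Hag'; right.
Qed.
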